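(* For $p_q\in(0,1)$, $p_a\in[0,1]$ let $$\mathbf{R}(p_q,p_a)=\Big\{(\lambda_p,\lambda_s)\in[0,1]^2:\ \lambda_s< p_q f_{sd}\Big[1-\frac{\lambda_p}{f_{pd}+p_a f_{ps}(1-f_{pd})}\Big],\ \lambda_p<\frac{f_{sd}(1-p_q)[f_{pd}+p_a f_{ps}(1-f_{pd})]}{f_{sd}(1-p_q)+p_a f_{ps}(1-f_{pd})}\Big\}.$$ Then $$\bigcup_{p_q\in(0,1),\,p_a\in[0,1]}\mathbf{R}(p_q,p_a)=\Big\{(\lambda_p,\lambda_s)\in[0,1]^2:\ \lambda_s<f_{sd}-\frac{f_{sd}+f_{ps}(1-f_{pd})}{f_{pd}+f_{ps}(1-f_{pd})}\,\lambda_p\Big\}.$$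
   Context: Constants $f_{pd},f_{ps},f_{sd}\in(0,1)$ with $f_{pd}<f_{sd}$ are link success probabilities (PU→destination, PU→SU, SU→destination). $\mathbf{R}(p_q,p_a)$ is the stable throughput region of the cognitive cooperative system under the randomized service policy with queue-selection probability $p_q$ and relay admission probability $p_a$. *)

(* Defs.v *)
From Stdlib Require Import Reals.
Open Scope R_scope.

Definition in_unit_square (lp ls : R) : Prop :=
  0 <= lp <= 1 /\ 0 <= ls <= 1.

Definition region (fpd fps fsd pq pa : R) (lp ls : R) : Prop :=
  in_unit_square lp ls /\
  ls < pq * fsd * (1 - lp / (fpd + pa * fps * (1 - fpd))) /\
  lp < fsd * (1 - pq) * (fpd + pa * fps * (1 - fpd))
       / (fsd * (1 - pq) + pa * fps * (1 - fpd)).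

Definition union_region (fpd fps fsd : R) (lp ls : R) : Prop :=
  in_unit_square lp ls /\
  ls < fsd - (fsd + fps * (1 - fpd)) / (fpd + fps * (1 - fpd)) * lp.

(* Main.v *)
Require Import Defs.
From Stdlib Require Import Reals Lra Psatz.
Open Scope R_scope.

Lemma lt_div_mul (x y z : R) : 0 < z -> x < y / z -> x * z < y.
Proof. intros Hz H. apply (Rmult_lt_compat_r z) in H; auto.
  unfold Rdiv in H. rewrite Rmult_assoc, Rinv_l, Rmult_1_r in H; lra. Qed.

Lemma mul_lt_div (x y z : R) : 0 < z -> x * z < y -> x < y / z.
Proof. intros Hz H. apply (Rmult_lt_reg_r z); auto.
  unfold Rdiv. rewrite Rmult_assoc, Rinv_l, Rmult_1_r; lra. Qed.

Theorem theorem2 (fpd fps fsd : R)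
  (Hpd : 0 < fpd < 1) (Hps : 0 < fps < 1) (Hsd : 0 < fsd < 1)
  (Hlt : fpd < fsd) :
  forall lp ls : R,
    (exists pq pa : R, 0 < pq < 1 /\ 0 <= pa <= 1 /\ region fpd fps fsd pq pa lp ls)
    <-> union_region fpd fps fsd lp ls.
Proof.
  intros lp ls.
  assert (Ha : 0 < fps * (1 - fpd)) by (apply Rmult_lt_0_compat; lra).
  set (a := fps * (1 - fpd)) in *.
  set (G := fpd + a).
  assert (HG : 0 < G) by (unfold G; lra).
  unfold region, union_region, in_unit_square.
  split.
  - intros [pq [pa [Hpq [Hpa [Hsq [H1 H2]]]]]].
    split; [exact Hsq|].
    replace (pa * fps * (1 - fpd)) with (pa * a) in H1, H2 by (unfold a; ring).
    assert (HD : 0 < fpd + pa * a) by nra.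
    set (D := fpd + pa * a) in *.
    assert (HE : 0 < fsd * (1 - pq) + pa * a) by nra.
    apply lt_div_mul in H2; [|exact HE].
    replace (pq * fsd * (1 - lp / D)) with ((pq * fsd * (D - lp)) / D) in H1
      by (field; lra).
    apply lt_div_mul in H1; [|exact HD].
    replace (fsd - (fsd + fps * (1 - fpd)) / (fpd + fps * (1 - fpd)) * lp) with ((fsd * G - (fsd + a) * lp) / G)
      by (unfold G, a in *; field; lra).
    apply mul_lt_div; [exact HG|].
    assert (HC : ls * D < fsd * D - lp * (fsd + pa * a)) by nra.
    assert (Hk : lp * (fsd + pa * a) * G >= (fsd + a) * lp * D).
    { unfold G, D.
      assert (0 <= lp * a * (1 - pa) * (fsd - fpd)).
      { apply Rmult_le_pos; [apply Rmult_le_pos; [apply Rmult_le_pos|]|]; lra. }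
      nra. }
    apply (Rmult_lt_reg_r D); [exact HD|].
    nra.
  - intros [Hsq H].
    destruct Hsq as [[Hlp0 Hlp1] [Hls0 Hls1]].
    replace (fsd - (fsd + fps * (1 - fpd)) / (fpd + fps * (1 - fpd)) * lp) with ((fsd * G - (fsd + a) * lp) / G) in H
      by (unfold G, a in *; field; lra).
    apply lt_div_mul in H; [|exact HG].
    assert (HK : 0 < fsd * (G - lp)) by nra.
    set (K := fsd * (G - lp)) in *.
    set (q0 := lp * a / K).
    set (q1 := 1 - ls * G / K).
    assert (Hq0 : 0 <= q0) by (unfold q0; apply Rmult_le_pos; [nra | left; apply Rinv_0_lt_compat; lra]).
    assert (Hq1 : q1 <= 1).
    { unfold q1. assert (0 <= ls * G / K) by (apply Rmult_le_pos; [nra | left; apply Rinv_0_lt_compat; lra]). lra. }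
    assert (Hq01 : q0 < q1).
    { unfold q0, q1. apply (Rmult_lt_reg_r K); [exact HK|].
      replace (lp * a / K * K) with (lp * a) by (field; lra).
      replace ((1 - ls * G / K) * K) with (K - ls * G) by (field; lra).
      unfold K. nra. }
    set (q := (q0 + q1) / 2).
    assert (Hqa : q0 < q) by (unfold q; lra).
    assert (Hqb : q < q1) by (unfold q; lra).
    exists (1 - q), 1.
    split; [unfold q; lra|].
    split; [lra|].
    split; [lra|].
    replace (fpd + 1 * fps * (1 - fpd)) with G by (unfold G, a; ring).
    split.
    + replace ((1 - q) * fsd * (1 - lp / G)) with ((1 - q) * K / G) by (unfold K; field; lra).
      apply mul_lt_div; [exact HG|].
      unfold q1 in Hqb.
      assert (ls * G / K < 1 - q) by lra.
      apply (Rmult_lt_compat_r K) in H0; [|exact HK].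
      replace (ls * G / K * K) with (ls * G) in H0 by (field; lra). lra.
    + replace (1 * fps * (1 - fpd)) with a by (unfold a; ring).
      replace (1 - (1 - q)) with q by ring.
      assert (Hqp : 0 < q) by lra.
      apply mul_lt_div; [nra|].
      unfold q0 in Hqa.
      assert (lp * a < q * K).
      { apply (Rmult_lt_compat_r K) in Hqa; [|exact HK].
        replace (lp * a / K * K) with (lp * a) in Hqa by (field; lra). lra. }
      unfold K in H0. nra.
Qed.
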